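(* Let $G$ be $\mathrm{Sym}(d)$ or $\mathrm{Alt}(d)$ for some $d\ge 2$, acting naturally on $X=\{1,\dots,d\}$. Then the natural action does not extend properly to a $2$-by-block-transitive action: there is no $G$-set $\Omega$ with a $G$-equivariant surjection $\Omega\to X$ whose fibres have size at least $2$ such that $G$ acts transitively on ordered pairs of points of $\Omega$ lying in distinct fibres. *)

(* Defs.v *)
From mathcomp Require Import all_boot all_order all_fingroup all_solvable.
Set Implicit Arguments. Unset Strict Implicit. Unset Printing Implicit Defensive.
Local Open Scope group_scope.

Definition is_G_action (d : nat) (G : {group {perm 'I_d}}) (Omega : Type)
  (to : Omega -> {perm 'I_d} -> Omega) : Prop :=
  (forall x, to x 1 = x) /\
  (forall x g h, g \in G -> h \in G -> to x (g * h) = to (to x g) h).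

Definition proper_2_by_block_transitive_extension (d : nat)
  (G : {group {perm 'I_d}}) (Omega : Type)
  (to : Omega -> {perm 'I_d} -> Omega) (pi : Omega -> 'I_d) : Prop :=
  [/\ is_G_action G to,
      (forall x g, g \in G -> pi (to x g) = g (pi x)),
      (forall i : 'I_d, exists x y : Omega, [/\ x <> y, pi x = i & pi y = i])
      & (forall x y x' y' : Omega, pi x <> pi y -> pi x' <> pi y' ->
           exists2 g, g \in G & to x g = x' /\ to y g = y')].

(* Main.v *)
Require Import Defs.
From mathcomp Require Import all_boot all_order all_fingroup all_solvable.
From mathcomp Require Import boolp zify.
Set Implicit Arguments. Unset Strict Implicit. Unset Printing Implicit Defensive.
Local Open Scope group_scope.

Lemma simple_idx (gT : finGroupType) (G S : {group gT}) :
  simple G -> S \subset G -> ~~ (G \subset S) -> #|G| <= (#|rcosets S G|)`!.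
Proof.
move=> simG sSG nGS.
pose nRA := actsRs_rcosets S G.
pose f := actperm <[nRA]>.
have inj: {in G &, injective f}.
  move=> a b Ga Gb eqf.
  have Hc: a * b^-1 \in gcore S G.
    rewrite -astabRs_rcosets; apply/astabP => C CR.
    have := congr1 (fun p : {perm _} => p C) eqf.
    rewrite !actpermE !actbyE //= => eqC.
    by rewrite actM /= eqC -actM mulgV act1.
  case/simpleP: simG => _ /(_ [group of gcore S G] (gcore_normal sSG)) [] /= Hcore.
    by apply/eqP; rewrite eq_mulgV1 -in_set1; move: Hc; rewrite Hcore.
  by case/negP: nGS; rewrite -Hcore gcore_sub.
rewrite -(card_in_imset inj) -card_perm; apply/subset_leq_card/subsetP => p.
case/imsetP => a Ga ->; rewrite /perm_on; apply/subsetP => C; rewrite inE actpermE /= /actby.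
by case: (C \in _) => //=; rewrite eqxx.
Qed.
Lemma even_fix (T : finType) (p : {perm T}) (U : {set T}) :
  #|U| <= 2 -> (forall y, y \notin U -> p y = y) -> ~~ odd_perm p -> p = 1.
Proof.
move=> cU fixU ev.
case: (boolP [exists y, p y != y]) => [/existsP [y Hy]|]; last first.
  move/existsPn => H; apply/permP => y; rewrite perm1; exact/eqP/negPn/H.
have yU : y \in U by apply: contraR Hy => /fixU ->.
have pyU : p y \in U.
  apply: contraR Hy => /fixU H; apply/eqP; exact: perm_inj H.
have EU : U = [set y; p y].
  apply/eqP; rewrite eq_sym eqEcard cards2 eq_sym Hy (leq_trans cU) // andbT.
  by apply/subsetP => u; rewrite !inE => /orP [] /eqP ->.
have Ep : p = tperm y (p y).
  apply/permP => u; case: tpermP => [->|->|nuy nupy] //.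
    have ppyU : p (p y) \in U.
      apply: contraR Hy => /fixU H; apply/eqP; exact: perm_inj (perm_inj H).
    move: ppyU; rewrite EU !inE => /orP [/eqP -> //|/eqP H].
    by move: Hy; rewrite (perm_inj H) eqxx.
  by apply: fixU; rewrite EU !inE negb_or; apply/andP; split; apply/eqP.
by move: ev; rewrite Ep odd_tperm eq_sym Hy.
Qed.
Section Ext.
Variables (d : nat) (G : {group {perm 'I_d}}) (Omega : Type)
  (to : Omega -> {perm 'I_d} -> Omega) (pi : Omega -> 'I_d).
Hypothesis HE : proper_2_by_block_transitive_extension G to pi.

Lemma e_act1 x : to x 1 = x.
Proof. by case: HE => [[]]. Qed.
Lemma e_actM x g h : g \in G -> h \in G -> to x (g * h) = to (to x g) h.
Proof. by case: HE => [[_ H]] *; apply: H. Qed.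
Lemma e_eqv x g : g \in G -> pi (to x g) = g (pi x).
Proof. by case: HE => _ H *; apply: H. Qed.
Lemma e_fib i : exists x y, [/\ x <> y, pi x = i & pi y = i].
Proof. by case: HE => _ _ H _; apply: H. Qed.
Lemma e_trans x y x' y' : pi x <> pi y -> pi x' <> pi y' ->
  exists2 g, g \in G & to x g = x' /\ to y g = y'.
Proof. by case: HE => _ _ _ H; apply: H. Qed.
Lemma e_pt i : exists x, pi x = i.
Proof. by case: (e_fib i) => x [y [_ H _]]; exists x. Qed.
Lemma e_other i x : exists x', pi x' = i /\ x' <> x.
Proof.
case: (e_fib i) => x1 [x2 [n12 H1 H2]].
case: (pselect (x1 = x)) => [E|]; last by exists x1.
by exists x2; split => // E2; apply: n12; rewrite E E2.
Qed.
Lemma e_actV x g : g \in G -> to (to x g) g^-1 = x.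
Proof. by move=> Gg; rewrite -e_actM ?groupV // mulgV e_act1. Qed.

Lemma key i j z c w : i != j -> pi z = j -> c \in G -> c j = i -> pi w = i ->
  exists2 a, a \in G & [/\ a i = i, a j = j & w = to z (c ^ a)].
Proof.
move=> nij pz Gc cj pw.
have pzc : pi (to z c) = i by rewrite e_eqv // pz.
have [a Ga [za zca]] : exists2 a, a \in G & to z a = z /\ to (to z c) a = w.
  apply: e_trans; rewrite ?pzc ?pz ?pw; apply/eqP => //; by rewrite eq_sym.
exists a => //; split.
- by have := e_eqv (to z c) Ga; rewrite zca pw pzc => E; rewrite -E.
- by have := e_eqv z Ga; rewrite za pz => E; rewrite -E.
by rewrite /conjg e_actM ?groupV ?groupM // -{1}za e_actV // e_actM // zca.
Qed.

Lemma sym_case : G :=: 'Sym_('I_d) -> 1 < d -> False.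
Proof.
move=> HG d1.
pose i := Ordinal (ltnW d1); pose j := Ordinal d1.
have nij : i != j by [].
have [z pz] := e_pt j; have [x px] := e_pt i; have [x' [px' nx]] := e_other i x.
have Gc : tperm i j \in G by rewrite HG inE.
have E w : pi w = i -> w = to z (tperm i j).
  move=> pw; have [a Ga [ai aj ->]] := key nij pz Gc (tpermR i j) pw.
  by rewrite tpermJ ai aj.
by apply: nx; rewrite (E _ px) (E _ px').
Qed.

Lemma memC (i : 'I_d) (p : {perm 'I_d}) : (p \in 'C[i | 'P]) = (p i == i).
Proof. by apply/astab1P/eqP. Qed.

Lemma stab_group (B : {group {perm 'I_d}}) x : B \subset G ->
  group_set [set p in B | asbool (to x p = x)].
Proof.
move=> sBG; apply/group_setP; split.
  by rewrite inE group1; apply/asboolP; apply: e_act1.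
move=> p q; rewrite !inE => /andP [Bp /asboolP Hp] /andP [Bq /asboolP Hq].
rewrite groupM //; apply/asboolP.
by rewrite e_actM ?(subsetP sBG) // Hp Hq.
Qed.

Lemma card_R0 (i j : 'I_d) : i != j -> #|~: [set i; j]| = d - 2.
Proof.
move=> nij; have := cardsC [set i; j]; rewrite cards2 nij card_ord => E.
by rewrite -[in RHS]E addKn.
Qed.

Lemma alt_small : G :=: 'Alt_('I_d) -> 1 < d -> d <= 5 -> False.
Proof.
move=> HG d1 d5.
have Gev p : (p \in G) = ~~ odd_perm p by rewrite HG Alt_even.
pose i := Ordinal (ltnW d1); pose j := Ordinal d1.
have nij : i != j by [].
have [z pz] := e_pt j; have [x px] := e_pt i.
have [z' [pz' nz]] := e_other j z; have [x' [px' nx]] := e_other i x.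
have [g Gg [xg zg]] : exists2 g, g \in G & to x g = x /\ to z g = z'.
  by apply: e_trans; rewrite ?px ?pz ?pz'; apply/eqP.
have gi : g i = i by rewrite -px -(e_eqv _ Gg) xg.
have gj : g j = j by rewrite -pz -(e_eqv _ Gg) zg pz'.
have g1 : g != 1 by apply: contra_notN nz => /eqP g1; rewrite -zg g1 e_act1.
have [h Gh [xh zh]] : exists2 h, h \in G & to x h = x' /\ to z h = z.
  by apply: e_trans; rewrite ?px ?pz ?px'; apply/eqP.
have hi : h i = i by rewrite -px -(e_eqv _ Gh) xh px'.
have hj : h j = j by rewrite -pz -(e_eqv _ Gh) zh.
have fixij p : p i = i -> p j = j -> forall y, y \notin ~: [set i; j] -> p y = y.
  by move=> pi_ pj y; rewrite !inE negbK => /orP [] /eqP ->.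
case: (ltnP d 5) => [d4 | d5'].
  case/eqP: g1; apply: (even_fix (U := ~: [set i; j])).
  - by rewrite card_R0 //; move: d4; clear; case: d => [|[|[|[|[|]]]]].
  - exact: fixij.
  - by rewrite -Gev.
have {d5 d5'} d5 : d = 5 by apply/eqP; rewrite eqn_leq d5 d5'.
pose H := ('C_G[i | 'P] :&: 'C[j | 'P])%G.
have memH p : (p \in H) = [&& p \in G, p i == i & p j == j].
  by rewrite !inE /= !sub1set !inE /aperm /= andbA.
have sHG : H \subset G by apply/subsetP => p; rewrite memH => /andP [].
pose A := Group (stab_group x sHG).
have gA : g \in A by rewrite inE memH Gg gi gj !eqxx; apply/asboolP.
have hA : h \notin A by rewrite inE; apply/nandP; right; apply/asboolP; rewrite xh.
have sAH : A \subset H by apply/subsetP => p; rewrite inE => /andP [].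
have hH : h \in H by rewrite memH Gh hi hj !eqxx.
have sgA : [set 1; g] \subset A.
  by apply/subsetP => q; rewrite in_set2 => /orP [] /eqP ->; rewrite ?group1.
have cA : 2 <= #|A| by have := subset_leq_card sgA; rewrite cards2 eq_sym g1.
have cAH : #|A| < #|H| by apply: proper_card; apply/properP; split => //; exists h.
have k2 : 2 < d by rewrite d5.
pose k := Ordinal k2.
have cH : #|H| <= 3.
  have inj : {in H &, injective (fun p : {perm 'I_d} => p k)}.
    move=> p1 q1; rewrite !memH => /and3P [Gp /eqP pi_ /eqP pj] /and3P [Gq /eqP qi /eqP qj] pqk.
    apply/eqP; rewrite eq_mulgV1; apply/eqP.
    apply: (even_fix (U := ~: [set i; j; k])).
    - have E := cardsC [set i; j; k]; rewrite card_ord in E.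
      have C3 : #|[set i; j; k]| = 3.
        by rewrite -setUA cardsU1 cards2 !inE /k /i /j /=.
      by rewrite -(leq_add2l 3) -{1}C3 E d5.
    - move=> y; rewrite !inE negbK => /orP [/orP []|] /eqP ->; rewrite permM.
      + by rewrite pi_ -{1}qi permK.
      + by rewrite pj -{1}qj permK.
      + by rewrite pqk permK.
    - by rewrite -Gev groupM ?groupV.
  apply: (@leq_trans (d - 2)); last by rewrite d5.
  rewrite -(card_in_imset inj) -(card_R0 nij); apply: subset_leq_card.
  apply/subsetP => y /imsetP [q2]; rewrite memH => /and3P [Gq2 /eqP q2i /eqP q2j] ->.
  rewrite !inE negb_or; apply/andP; split.
  + by rewrite -{1}q2i (inj_eq perm_inj).
  + by rewrite -{1}q2j (inj_eq perm_inj).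
have dv := cardSg sAH.
have cA2 : #|A| = 2 by apply/eqP; rewrite eqn_leq cA andbT -ltnS (leq_trans cAH cH).
have cH3 : #|H| = 3 by apply/eqP; rewrite eqn_leq cH -cA2 cAH.
by move: dv; rewrite cA2 cH3.
Qed.

Lemma alt_big : G :=: 'Alt_('I_d) -> 5 < d -> False.
Proof.
move=> HG d6.
have Gev p : (p \in G) = ~~ odd_perm p by rewrite HG Alt_even.
have d1 : 1 < d by apply: leq_trans d6.
have d2 : 2 < d by apply: leq_trans d6.
pose i := Ordinal (ltnW d1); pose j := Ordinal d1; pose k0 := Ordinal d2.
have nij : i != j by []. have nik : i != k0 by []. have njk : j != k0 by [].
have [x px] := e_pt i.
have [x' [px' nx]] := e_other i x.
pose G1 := 'C_G[i | 'P]%G.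
have memG1 p : (p \in G1) = (p \in G) && (p i == i).
  by rewrite !inE /= !sub1set !inE /aperm /=.
have sG1 : G1 \subset G by apply/subsetP => p; rewrite memG1 => /andP [].
pose S := Group (stab_group x sG1).
have sSG1 : S \subset G1 by apply/subsetP => p; rewrite inE => /andP [].
have nG1S : ~~ (G1 \subset S).
  have [y py] := e_pt j.
  have [h Gh [xh yh]] : exists2 h, h \in G & to x h = x' /\ to y h = y.
    by apply: e_trans; rewrite ?px ?py ?px'; apply/eqP.
  have hi : h i = i by rewrite -px -(e_eqv _ Gh) xh px'.
  apply/negP => /subsetP /(_ h); rewrite memG1 Gh hi eqxx => /(_ isT).
  by rewrite inE => /andP [_ /asboolP E]; apply: nx; rewrite -xh E.
have cT : 2 < #|'I_d| by rewrite card_ord.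
have iso := rfd_iso i.
have cT' : #|{: {y : 'I_d | y != i}}| = d.-1 by rewrite card_sig cardC1 card_ord.
have simG1 : simple G1.
  have -> : G1 = 'C_('Alt_('I_d))[i | 'P]%G by apply/val_inj; rewrite /= HG.
  rewrite (isog_simple iso); apply: simple_Alt5; rewrite cT'.
  by move: d6; clear; case: d => [|[|[|[|[|[|]]]]]].
have oG1 : (2 * #|G1|)%N = (d.-1)`!.
  have -> : #|G1| = #|'C_('Alt_('I_d))[i | 'P]| by rewrite /= HG.
  rewrite (card_isog iso) card_Alt cT' //.
  by move: d6; clear; case: d => [|[|[|]]].
pose e := tperm j k0 * tperm i j.
pose cm (m : 'I_d) := tperm i j * tperm j m.
have Ge : e \in G by rewrite Gev odd_permM !odd_tperm.
have ei : e i = j by rewrite permM (@tpermD _ j k0 i) ?tpermL.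
have cmj m : m != i -> cm m j = i.
  by move=> nmi; rewrite permM tpermR tpermD // eq_sym.
have Gcm m : m != j -> cm m \in G.
  by move=> nmj; rewrite Gev odd_permM !odd_tperm nij eq_sym nmj.
pose z := to x e.
have pz : pi z = j by rewrite e_eqv // px.
have cidx : #|rcosets S G1| <= d - 2.
  rewrite -(card_R0 nij).
  apply: (leq_trans _ (leq_imset_card (fun m => S :* (e * cm m)) _)).
  apply: subset_leq_card; apply/subsetP => C /imsetP [g G1g ->].
  move: (G1g); rewrite memG1 => /andP [Gg /eqP gi].
  have pw : pi (to x g) = i by rewrite e_eqv // px.
  have [a Ga [ai aj E]] := key nij pz (Gcm k0 isT) (cmj k0 isT) pw.
  have nak_i : a k0 != i by rewrite -{1}ai (inj_eq perm_inj).
  have nak_j : a k0 != j by rewrite -{1}aj (inj_eq perm_inj).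
  have Ec : (cm k0) ^ a = cm (a k0) by rewrite /cm conjMg !tpermJ ai aj.
  rewrite Ec /z -e_actM ?Gcm // in E.
  have G1ec : e * cm (a k0) \in G1.
    by rewrite memG1 groupM ?Gcm //= permM ei cmj.
  apply/imsetP; exists (a k0); first by rewrite !inE negb_or nak_i nak_j.
  rewrite rcosetE; apply/rcoset_eqP; rewrite mem_rcoset inE groupM ?groupV //=.
  apply/asboolP; rewrite e_actM ?groupV ?(subsetP sG1) // E e_actV //.
  exact: (subsetP sG1).
have cG1 := leq_trans (simple_idx simG1 sSG1 nG1S) (leq_fact cidx).
have : (d.-1)`! <= (2 * (d - 2)`!)%N by rewrite -oG1 leq_mul2l.
have -> : d.-1 = (d - 2).+1 by clear -d6; lia.
rewrite factS leq_pmul2r ?fact_gt0 //.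
by clear -d6; lia.
Qed.
End Ext.

Local Close Scope group_scope.

Theorem corollary3p6 (d : nat) (G : {group {perm 'I_d}}) :
  1 < d ->
  (G :=: ('Sym_('I_d))%g \/ G :=: ('Alt_('I_d))%g) ->
  ~ exists (Omega : Type) (to : Omega -> {perm 'I_d} -> Omega)
           (pi : Omega -> 'I_d),
      proper_2_by_block_transitive_extension G to pi.
Proof.
move=> d1 HG [Omega [to [pi HE]]].
case: HG => HG; first exact: (sym_case HE HG d1).
case: (leqP d 5) => d5; first exact: (alt_small HE HG d1 d5).
exact: (alt_big HE HG d5).
Qed.
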